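(* Let $F \in \mathbb{C}^{n \times n}$ be a unitary matrix with $|F_{ij}|^2 \leq \frac{c}{n}$ for all $i,j$ (for some constant $c > 0$), let $I\in\mathbb{C}^{n\times n}$ be the identity, and let $A = [F \enspace I] \in \mathbb{C}^{n \times 2n}$. Let $1\le k,t\le n$ be integers. Then $$\left(1-\sqrt{\frac{ckt}{n}}\right) \| x \|^2_2 \leq \|Ax\|^2_2 \leq \left(1+\sqrt{\frac{ckt}{n}}\right) \| x \|^2_2$$ for all $x \in M_{k,t}$.
   Context: $M_{k,t}$ is the set of $(k,t)$-sparse vectors in $\mathbb{C}^{2n}$, i.e. vectors $x = [x_1 \enspace x_2]^T$ with $x_1, x_2 \in \mathbb{C}^n$, $x_1$ having at most $k$ nonzero entries and $x_2$ having at most $t$ nonzero entries. *)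

(* Defs.v *)
From HB Require Import structures.
From mathcomp Require Import all_boot all_order all_algebra.
From mathcomp Require Import reals complex.
From mathcomp Require Export spectral sesquilinear.
Set Implicit Arguments. Unset Strict Implicit. Unset Printing Implicit Defensive.
Import Order.TTheory GRing.Theory Num.Theory.
Local Open Scope ring_scope.

Definition sqnorm {C : numClosedFieldType} {m : nat} (x : 'cV[C]_m) : C :=
  \sum_(i < m) `|x i 0| ^+ 2.

Definition nnz {C : numClosedFieldType} {m : nat} (x : 'cV[C]_m) : nat :=
  #|[set i : 'I_m | x i 0 != 0]|.

Definition sparse_kt {C : numClosedFieldType} (n k t : nat) (x : 'cV[C]_(n + n)) : Prop :=
  (nnz (usubmx x) <= k)%N /\ (nnz (dsubmx x) <= t)%N.

(* Main.v *)
Require Import Defs.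
From HB Require Import structures.
From mathcomp Require Import all_boot all_order all_algebra.
From mathcomp Require Import reals complex spectral sesquilinear.
From mathcomp Require Import ring.
Import Order.TTheory GRing.Theory Num.Theory.
Local Open Scope ring_scope.

Section Aux.
Variable C : numClosedFieldType.

Lemma sqnorm_col n (x : 'cV[C]_(n + n)) :
  sqnorm x = sqnorm (usubmx x) + sqnorm (dsubmx x).
Proof. by rewrite /sqnorm big_split_ord /=; congr (_ + _); apply: eq_bigr => i _; rewrite mxE. Qed.

Lemma mulA_split n (F : 'M[C]_n) (x : 'cV[C]_(n + n)) :
  row_mx F 1%:M *m x = F *m usubmx x + dsubmx x.
Proof. by rewrite -{1}(vsubmxK x) mul_row_col mul1mx. Qed.

Lemma sqnorm_ge0 m (y : 'cV[C]_m) : 0 <= sqnorm y.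
Proof. by apply: sumr_ge0 => i _; apply: exprn_ge0. Qed.

Local Open Scope sesquilinear_scope.

Lemma sqnormE m (y : 'cV[C]_m) : sqnorm y = (y ^t* *m y) 0 0.
Proof. by rewrite /sqnorm mxE; apply: eq_bigr => i _; rewrite !mxE normCK mulrC. Qed.

Lemma sqnorm_unitary n (F : 'M[C]_n) (u : 'cV[C]_n) :
  F \is unitarymx -> sqnorm (F *m u) = sqnorm u.
Proof.
move=> FU; rewrite !sqnormE.
have H : F ^t* *m F = 1%:M.
  by rewrite -trmxC_unitary in FU; move/unitarymxP: FU; rewrite trmxCK.
by rewrite trmx_mul map_mxM -mulmxA (mulmxA (F ^t*)) H mul1mx.
Qed.
Lemma sqnormD m (y v : 'cV[C]_m) :
  sqnorm (y + v) = sqnorm y + sqnorm v +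
   ((\sum_i y i 0 * (v i 0)^*) + (\sum_i y i 0 * (v i 0)^*)^*).
Proof.
rewrite /sqnorm rmorph_sum /= -!big_split /=; apply: eq_bigr => i _.
rewrite !mxE !normCK rmorphD rmorphM /= conjCK; ring.
Qed.

Lemma key m (F : 'M[C]_m) (u v : 'cV[C]_m) (mm : C) : 0 <= mm ->
  (forall i j, `|F i j| <= mm) ->
  `|\sum_i (F *m u) i 0 * (v i 0)^*| <= mm * (\sum_j `|u j 0|) * (\sum_i `|v i 0|).
Proof.
move=> mm0 HF; apply: (le_trans (ler_norm_sum _ _ _)).
rewrite mulr_sumr; apply: ler_sum => i _.
rewrite normrM norm_conjC; apply: ler_wpM2r => //.
rewrite mxE mulr_sumr; apply: (le_trans (ler_norm_sum _ _ _)); apply: ler_sum => j _.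
by rewrite normrM; apply: ler_wpM2r => //.
Qed.

Lemma cs m (y : 'cV[C]_m) : (\sum_j `|y j 0|) ^+ 2 <= (nnz y)%:R * sqnorm y.
Proof.
pose S := [set j | y j 0 != 0].
have E1 : \sum_j `|y j 0| = \sum_(j in S) `|y j 0|.
  rewrite [RHS]big_mkcond /=; apply: eq_bigr => j _; rewrite inE.
  by case: eqP => // ->; rewrite normr0.
have E2 : sqnorm y = \sum_(j in S) `|y j 0| ^+ 2.
  rewrite /sqnorm [RHS]big_mkcond /=; apply: eq_bigr => j _; rewrite inE.
  by case: eqP => // ->; rewrite normr0 expr0n.
rewrite E1 E2 /nnz -/S.
rewrite -(ler_pMn2r (n := 2)) //.
rewrite expr2 mulr_suml.
have -> : \sum_(i in S) `|y i 0| * (\sum_(j in S) `|y j 0|) = \sum_(i in S) \sum_(j in S) `|y i 0| * `|y j 0|.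
  by apply: eq_bigr => i _; rewrite mulr_sumr.
apply: (le_trans (y := \sum_(i in S) \sum_(j in S) (`|y i 0| ^+ 2 + `|y j 0| ^+ 2))).
  rewrite -sumrMnl; apply: ler_sum => i _; rewrite -sumrMnl; apply: ler_sum => j _.
  by apply: (real_leif_mean_square_scaled _ _); apply: normr_real.
under eq_bigr do rewrite big_split /=.
rewrite big_split /= [X in _ + X]exchange_big /= -mulr2n.
rewrite ler_pMn2r //.
rewrite mulr_sumr; apply: ler_sum => i _.
by rewrite sumr_const mulr_natl.
Qed.

End Aux.

Theorem theorem5 (R : realType) (n k t : nat) (F : 'M[R[i]]_n) (c : R[i]) :
  F \is unitarymx ->
  0 < c ->
  (forall i j : 'I_n, `|F i j| ^+ 2 <= c / n%:R) ->
  (1 <= k <= n)%N -> (1 <= t <= n)%N ->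
  forall x : 'cV[R[i]]_(n + n), sparse_kt k t x ->
    let A : 'M[R[i]]_(n, n + n) := row_mx F 1%:M in
    (1 - sqrtC (c * k%:R * t%:R / n%:R)) * sqnorm x <= sqnorm (A *m x) /\
    sqnorm (A *m x) <= (1 + sqrtC (c * k%:R * t%:R / n%:R)) * sqnorm x.
Proof.
move=> FU c0 HF /andP[k1 kn] /andP[t1 tn] x [Hk Ht] A.
rewrite /A mulA_split sqnormD sqnorm_unitary // (@sqnorm_col _ _ x).
set u := usubmx x; set v := dsubmx x.
set z := \sum_i _.
set U := sqnorm u; set V := sqnorm v.
set s := sqrtC _.
have U0 : 0 <= U by apply: sqnorm_ge0.
have V0 : 0 <= V by apply: sqnorm_ge0.
have cn0 : 0 <= c / n%:R by rewrite divr_ge0 // ltW.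
have ckt0 : 0 <= c * k%:R * t%:R / n%:R by rewrite divr_ge0 // !mulr_ge0 // ltW.
suff H : `|z + z^*| <= s * (U + V).
  have Rw : z + z^* \is Num.real by rewrite CrealE rmorphD /= conjCK addrC.
  move: H; rewrite real_ler_norml // => /andP[H1 H2]; split.
    by rewrite mulrBl mul1r lerD2l.
  by rewrite mulrDl mul1r lerD2l.
apply: (le_trans (ler_normD _ _)); rewrite norm_conjC -mulr2n.
pose mm := sqrtC (c / n%:R).
have mm0 : 0 <= mm by rewrite sqrtC_ge0.
have HFm : forall i j, `|F i j| <= mm.
  by move=> i j; rewrite -(sqrCK (normr_ge0 _)) ler_sqrtC ?nnegrE ?exprn_ge0.
have Hz := @key _ _ F u v mm mm0 HFm.
move: Hz; set a := \sum_j `|u j 0|; set b := \sum_j `|v j 0| => Hz.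
have a0 : 0 <= a by apply: sumr_ge0 => *.
have b0 : 0 <= b by apply: sumr_ge0 => *.
apply: (le_trans (ler_wMn2r 2 Hz)).
have P1 : mm * a * b *+ 2 \in Num.nneg by rewrite nnegrE; apply: mulrn_wge0; exact: (mulr_ge0 (mulr_ge0 mm0 a0) b0).
have P2 : s * (U + V) \in Num.nneg by rewrite nnegrE; apply: mulr_ge0; [rewrite sqrtC_ge0; exact: ckt0 | exact: (addr_ge0 U0 V0)].
rewrite -(@ler_pXn2r _ 2 isT _ _ P1 P2).
have -> : (mm * a * b *+ 2) ^+ 2 = mm ^+ 2 * (a ^+ 2 * b ^+ 2) * 4%:R.
  by rewrite -mulr_natr; ring.
rewrite sqrtCK exprMn sqrtCK.
have Ha : a ^+ 2 <= k%:R * U.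
  apply: (le_trans (@cs _ _ u)); apply: (ler_wpM2r U0); by rewrite ler_nat.
have Hb : b ^+ 2 <= t%:R * V.
  apply: (le_trans (@cs _ _ v)); apply: (ler_wpM2r V0); by rewrite ler_nat.
have H4 : (0 : R[i]) <= 4%:R by apply: ler0n.
apply: (le_trans (y := c / n%:R * (k%:R * U * (t%:R * V)) * 4%:R)).
  apply: (ler_wpM2r H4); apply: (ler_wpM2l cn0).
  exact: (ler_pM (exprn_ge0 2 a0) (exprn_ge0 2 b0) Ha Hb).
have -> : c / n%:R * (k%:R * U * (t%:R * V)) * 4%:R = c * k%:R * t%:R / n%:R * (U * V *+ 4).
  by rewrite -mulr_natr; ring.
apply: (ler_wpM2l ckt0).
exact: (real_leif_AGM2_scaled (ger0_real U0) (ger0_real V0)).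
Qed.
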